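(* Let $\delta\ge 2$ and $n\ge 8\delta$ be integers. Then $\lambda_1\big(D(K_\delta\vee(K_{n-2\delta}+\delta K_1))\big)>n+\delta$, and for every integer $s$ with $\delta+1\le s\le \frac{n-1}{2}$, $$\lambda_1\big(D(K_\delta\vee(K_{n-2\delta}+\delta K_1))\big)<\lambda_1\big(D(K_s\vee(K_{n-2s}+sK_1))\big).$$
   Context: For a connected graph $G$, $D(G)$ is the distance matrix and $\lambda_1(D(G))$ its largest eigenvalue. $K_m$ is the complete graph, $+$ is disjoint union, $sK_1$ is $s$ isolated vertices, $\vee$ is the join (disjoint union plus all edges between the two parts). *)

(* Defs.v *)
From HB Require Import structures.
From mathcomp Require Import all_boot all_order all_algebra.
From mathcomp Require Import reals.
Set Implicit Arguments. Unset Strict Implicit. Unset Printing Implicit Defensive.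
Import Order.TTheory GRing.Theory Num.Theory.
Local Open Scope ring_scope.

(* Simple graphs are symmetric irreflexive relations [e : rel T] on a finite
   vertex type [T]. *)

Definition completeG (m : nat) : rel 'I_m := fun x y => x != y.

Definition edgelessG (m : nat) : rel 'I_m := fun _ _ => false.

Definition gunion (T1 T2 : finType) (e1 : rel T1) (e2 : rel T2) : rel (T1 + T2)%type :=
  fun x y => match x, y with
             | inl a, inl b => e1 a b
             | inr a, inr b => e2 a b
             | _, _ => false
             end.

Definition gjoin (T1 T2 : finType) (e1 : rel T1) (e2 : rel T2) : rel (T1 + T2)%type :=
  fun x y => match x, y with
             | inl a, inl b => e1 a b
             | inr a, inr b => e2 a b
             | _, _ => true
             end.

Definition walkb (T : finType) (e : rel T) (u v : T) (k : nat) : bool :=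
  [exists p : k.-tuple T, path e u p && (last u p == v)].

(* graph distance: least k such that a walk of length k from u to v exists
   (for a connected graph this is < #|T|) *)
Definition gdist (T : finType) (e : rel T) (u v : T) : nat :=
  find (walkb e u v) (iota 0 #|T|).

Definition distmx (R : realType) (T : finType) (e : rel T) : 'M[R]_#|T| :=
  \matrix_(i, j) (gdist e (enum_val i) (enum_val j))%:R.

Definition is_lambda1 (R : realType) (m : nat) (A : 'M[R]_m) (l : R) : Prop :=
  eigenvalue A l /\ (forall l' : R, eigenvalue A l' -> l' <= l).

Definition KsG (n s : nat) : rel ('I_s + ('I_((n - 2 * s)%N) + 'I_s))%type :=
  gjoin (@completeG s) (gunion (@completeG (n - 2 * s)%N) (@edgelessG s)).

(* Main.v *)
Require Import Defs.
From HB Require Import structures.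
From mathcomp Require Import all_boot all_order all_algebra.
From mathcomp Require Import reals.
From mathcomp Require Import ring lra zify.
Import Order.TTheory GRing.Theory Num.Theory.
Set Implicit Arguments. Unset Strict Implicit.
Local Open Scope ring_scope.
Lemma perron (R : realType) (m : nat) (A : 'M[R]_m) (x : 'I_m -> R) (l : R) :
  (forall i j, 0 <= A i j) -> (forall i, 0 < x i) ->
  (forall j, \sum_i x i * A i j = l * x j) ->
  (forall i, \sum_j A i j * x j = l * x i) -> (0 < m)%N -> is_lambda1 A l.
Proof.
move=> A0 xpos rowE colE m0; split.
  apply/eigenvalueP; exists (\row_i x i).
    apply/rowP => j; rewrite !mxE -rowE; apply: eq_bigr => i _; by rewrite mxE.
  apply/eqP => /rowP /(_ (Ordinal m0)); rewrite !mxE => h.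
  by move: (xpos (Ordinal m0)); rewrite h ltxx.
move=> l' /eigenvalueP [v hv nz].
have hj j : l' * v 0 j = \sum_i v 0 i * A i j.
  by move/rowP: hv => /(_ j); rewrite !mxE => <-.
have [i0 hi0] : exists i, v 0 i != 0.
  apply/existsP; move: nz; apply: contraR; rewrite negb_exists => /forallP h.
  by apply/eqP/rowP => j; rewrite mxE; move: (h j); rewrite negbK => /eqP.
have S0 : 0 < \sum_i `|v 0 i| * x i.
  rewrite (bigD1 i0) //=.
  have h1 : 0 < `|v 0 i0| * x i0 by apply: mulr_gt0; [rewrite normr_gt0|].
  have h2 : 0 <= \sum_(i | i != i0) `|v 0 i| * x i.
    by apply: sumr_ge0 => i _; apply: mulr_ge0 => //; apply: ltW.
  lra.
have key : `|l'| * \sum_i `|v 0 i| * x i <= l * \sum_i `|v 0 i| * x i.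
  rewrite mulr_sumr.
  have -> : \sum_i `|l'| * (`|v 0 i| * x i) = \sum_j `|\sum_i v 0 i * A i j| * x j.
    by apply: eq_bigr => j _; rewrite -hj normrM mulrA.
  apply: le_trans (_ : \sum_j (\sum_i `|v 0 i| * A i j) * x j <= _).
    apply: ler_sum => j _; apply: ler_wpM2r; first exact: ltW.
    apply: le_trans (ler_norm_sum _ _ _) _.
    by apply: ler_sum => i _; rewrite normrM (ger0_norm (A0 _ _)).
  rewrite mulr_sumr.
  under eq_bigr do rewrite mulr_suml.
  rewrite exchange_big /=; apply: ler_sum => i _.
  rewrite mulrCA -colE mulr_sumr.

  by rewrite (eq_bigr (fun j => `|v 0 i| * (A i j * x j))) // => j _; rewrite mulrA.
apply: le_trans (ler_norm l') _.
by rewrite -(ler_pM2r S0).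
Qed.
Local Close Scope ring_scope.
Lemma walk0 (T : finType) (e : rel T) u v : walkb e u v 0 = (u == v).
Proof.
apply/existsP/idP => [[p]|H]; first by rewrite (tuple0 p).
by exists [tuple].
Qed.

Lemma walk1 (T : finType) (e : rel T) u v : walkb e u v 1 = e u v.
Proof.
apply/existsP/idP => [[p]|H].
  case: p => [[|w [|y s]] hs] //=.

  by rewrite andbT => /andP[? /eqP<-].
exists [tuple v].

by rewrite /= eqxx andbT H.
Qed.

Lemma walk2 (T : finType) (e : rel T) u v w : e u w -> e w v -> walkb e u v 2.
Proof. by move=> h1 h2; apply/existsP; exists [tuple w; v]; rewrite /= h1 h2 eqxx. Qed.

Lemma gdistE (T : finType) (e : rel T) u v :
  (2 < #|T|)%N ->
  (u != v -> ~~ e u v -> exists w, e u w && e w v) ->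
  gdist e u v = if u == v then 0%N else if e u v then 1%N else 2%N.
Proof.
move=> hT hw; rewrite /gdist; case: #|T| hT => [|[|[|k]]] // _ /=.
rewrite walk0 walk1; case: eqP => // /eqP nuv; case: ifP => // neuv.
have [w /andP[h1 h2]] := hw nuv (negbT neuv).
by rewrite (walk2 h1 h2).
Qed.
Local Open Scope ring_scope.
Lemma sum_offdiag (R : comRingType) k (j : 'I_k) (c : R) (F : 'I_k -> R) :
  (forall a, a != j -> F a = c) -> F j = 0 -> \sum_a F a = (k%:R - 1) * c.
Proof.
move=> hF hj; rewrite (bigD1 j) //= hj add0r.
have h : \sum_(a < k) c = c + \sum_(a < k | a != j) c by rewrite (bigD1 j).
rewrite sumr_const card_ord in h. rewrite (eq_bigr (fun _ => c)); last by move=> a /hF.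
have -> : \sum_(a < k | a != j) c = c *+ k - c by rewrite h; ring
.
by rewrite -mulr_natl; ring.
Qed.

Lemma sum_const_ord (R : comRingType) k (c : R) (F : 'I_k -> R) :
  (forall a, F a = c) -> \sum_a F a = k%:R * c.
Proof. by move=> hF; rewrite (eq_bigr (fun _ => c)) // sumr_const card_ord mulr_natl. Qed.

Lemma KsG_sym n s u v : @KsG n s u v = @KsG n s v u.
Proof.
case: u => [a|[a|a]]; case: v => [b|[b|b]] //=; rewrite /completeG //.
by rewrite eq_sym.
by rewrite eq_sym.
Qed.

Lemma KsG_dist n s (s2 : (2 <= s)%N) u v :
  gdist (@KsG n s) u v = if u == v then 0%N else if @KsG n s u v then 1%N else 2%N.
Proof.
apply: gdistE.
  by rewrite !card_sum !card_ord; lia.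
have s0 : (0 < s)%N by lia.
case: u => [a|[a|a]]; case: v => [b|[b|b]] //= => neq; rewrite /completeG //=.
- by move: neq; rewrite /eq_op /= => ->.
- by exists (inl (Ordinal s0)).
- by exists (inl (Ordinal s0)).
- by exists (inl (Ordinal s0)).
- by exists (inl (Ordinal s0)).
Qed.

Definition xf (R : realType) n s (xa xb xc : R) (u : ('I_s + ('I_((n - 2 * s)%N) + 'I_s))%type) : R :=
  match u with inl _ => xa | inr (inl _) => xb | inr (inr _) => xc end.

Lemma KsG_rowsum (R : realType) n s (s2 : (2 <= s)%N) (xa xb xc : R) v :
  \sum_u @xf R n s xa xb xc u * (gdist (@KsG n s) u v)%:R =
  match v with
  | inl _ => (s%:R - 1) * xa + (n - 2 * s)%N%:R * xb + s%:R * xc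
  | inr (inl _) => s%:R * xa + ((n - 2 * s)%N%:R - 1) * xb + s%:R * (xc * 2)
  | inr (inr _) => s%:R * xa + (n - 2 * s)%N%:R * (xb * 2) + (s%:R - 1) * (xc * 2)
  end.
Proof.
rewrite big_sumType big_sumType /=.
case: v => [j|[j|j]].
- rewrite (@sum_offdiag _ _ j xa); first last.
  + by rewrite KsG_dist // eqxx mulr0.
  + by move=> a naj; rewrite KsG_dist // /eq_op /= (negbTE naj) /= /completeG naj mulr1.
  rewrite (@sum_const_ord _ _ xb); last by move=> a; rewrite KsG_dist // mulr1.
  rewrite (@sum_const_ord _ _ xc) ?addrA //; move=> a; by rewrite KsG_dist // mulr1.
- rewrite (@sum_const_ord _ _ xa); last by move=> a; rewrite KsG_dist // mulr1.
  rewrite (@sum_offdiag _ _ j xb); first last.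
  + by rewrite KsG_dist // eqxx mulr0.
  + by move=> a naj; rewrite KsG_dist // /eq_op /= /eq_op /= (negbTE naj) /= /completeG naj mulr1.
  rewrite (@sum_const_ord _ _ (xc * 2)) ?addrA //; move=> a; by rewrite KsG_dist.
- rewrite (@sum_const_ord _ _ xa); last by move=> a; rewrite KsG_dist // mulr1.
  rewrite (@sum_const_ord _ _ (xb * 2)); last by move=> a; rewrite KsG_dist.
  rewrite (@sum_offdiag _ _ j (xc * 2)) ?addrA //.
  + by move=> a naj; rewrite KsG_dist // /eq_op /= /eq_op /= (negbTE naj).
  + by rewrite KsG_dist // eqxx mulr0.
Qed.

Definition Cf (R : realType) (S B l : R) := (l - S + 1) * (l + B + 1) - B * (2 * l - S + 2).
Definition Pf (R : realType) (S B l : R) :=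
  (l - 2 * S + 2) * Cf S B l - S ^+ 2 * (l + B + 1) - 2 * B * S * (2 * l - S + 2).

Lemma KsG_distC n s (s2 : (2 <= s)%N) u v :
  gdist (@KsG n s) u v = gdist (@KsG n s) v u.
Proof. by rewrite !KsG_dist // eq_sym KsG_sym. Qed.

Lemma KsG_spec (R : realType) n s (s2 : (2 <= s)%N) (l : R) :
  s%:R + (n - 2 * s)%N%:R < l -> Pf s%:R (n - 2 * s)%N%:R l = 0 ->
  is_lambda1 (@distmx R _ (@KsG n s)) l.
Proof.
set S : R := s%:R; set B : R := (n - 2 * s)%N%:R => hl hP.
have S2 : 2 <= S by rewrite /S ler_nat.
have B0 : 0 <= B by rewrite /B ler0n.
set xa := S * (l + B + 1); set xb := S * (2 * l - S + 2); set xc := Cf S B l.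
have xa0 : 0 < xa by rewrite /xa; nra.
have xb0 : 0 < xb by rewrite /xb; nra.
have xc0 : 0 < xc by rewrite /xc /Cf; nra.
have eqs v : \sum_u @xf R n s xa xb xc u * (gdist (@KsG n s) u v)%:R = l * @xf R n s xa xb xc v.
  rewrite KsG_rowsum //; case: v => [j|[j|j]] /=.
  - rewrite /xa /xb /xc /Cf -/S -/B; ring.
  - rewrite /xa /xb /xc /Cf -/S -/B; ring.
  - apply/eqP; rewrite -subr_eq0; apply/eqP.
    transitivity (- Pf S B l); last by rewrite hP oppr0.
    rewrite /Pf /xa /xb /xc /Cf -/S -/B; ring.
apply: (@perron _ _ _ (fun i => @xf R n s xa xb xc (enum_val i))).
- by move=> i j; rewrite mxE ler0n.
- by move=> i; case: (enum_val i) => [a|[a|a]].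
- move=> j; rewrite -eqs; under eq_bigr do rewrite mxE.
  rewrite -(big_enum_val (A := predT) (fun u => @xf R n s xa xb xc u * (gdist (@KsG n s) u (enum_val j))%:R)).
  by apply: eq_bigl.
- move=> i; rewrite -eqs; under eq_bigr do rewrite mxE KsG_distC // mulrC.
  rewrite -(big_enum_val (A := predT) (fun u => @xf R n s xa xb xc u * (gdist (@KsG n s) u (enum_val i))%:R)).
  by apply: eq_bigl.
- by rewrite !card_sum !card_ord; lia.
Qed.


Lemma Pf_diff (R : realType) (S D N x : R) :
  Pf S (N - 2 * S) x - Pf D (N - 2 * D) x =
  (S - D) * (- x ^+ 2 + (5 * (S + D) - 2 * N - 1) * x - 2 * (S ^+ 2 + S * D + D ^+ 2)
             + (S + D) * N + 5 * (S + D) - 2 * N).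
Proof. rewrite /Pf /Cf; ring. Qed.

Lemma h_neg_aux (R : realType) (e f g y : R) :
  0 <= e -> 0 <= f -> 0 <= g -> 0 <= y -> 0 <= 2 * f + g - 6 * e - 9 ->
  7 * e ^+ 2 + 3 * e * f - 4 * e * g + 30 * e - 2 * f ^+ 2 - 6 * f * g - 3 * f * y
  - 5 * f - 3 * g ^+ 2 - 4 * g * y - 23 * g - y ^+ 2 - 8 * y + 17 < 0.
Proof.
move=> e0 f0 g0 y0 m0.
have h1 := mulr_ge0 m0 e0. have h2 := mulr_ge0 m0 f0.
have h3 := mulr_ge0 e0 f0. have h4 := mulr_ge0 e0 g0. have h5 := mulr_ge0 f0 g0.
have h6 := mulr_ge0 g0 g0. have h7 := mulr_ge0 f0 y0. have h8 := mulr_ge0 g0 y0.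
have h9 := mulr_ge0 y0 y0.
nra.
Qed.

Lemma h_neg (R : realType) (S D N x : R) :
  2 <= D -> D + 1 <= S -> 2 * S + 1 <= N -> 8 * D <= N -> N + D <= x ->
  (- x ^+ 2 + (5 * (S + D) - 2 * N - 1) * x - 2 * (S ^+ 2 + S * D + D ^+ 2)
             + (S + D) * N + 5 * (S + D) - 2 * N) < 0.
Proof.
move=> hD hS hN hN8 hx.
have := @h_neg_aux R (D - 2) (S - D - 1) (N - 2 * S - 1) (x - N - D).
have E : forall a b : R, a < 0 -> a = b -> b < 0 by move=> a b ? <-.
move=> H; apply: E (H _ _ _ _ _) _; lra.
Qed.

Lemma Pd_neg (R : realType) (D N : R) : 2 <= D -> 8 * D <= N -> Pf D (N - 2 * D) (N + D) < 0.
Proof.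
move=> hD hN; set e := D - 2; set k := N - 8 * D.
have e0 : 0 <= e by rewrite /e; lra.
have k0 : 0 <= k by rewrite /k; lra.
have -> : D = e + 2 by rewrite /e; ring.
have -> : N = 8 * e + 16 + k by rewrite /e /k; ring.
rewrite /Pf /Cf.
have : 0 <= e * e * e by rewrite !mulr_ge0.
have : 0 <= e * e * k by rewrite !mulr_ge0.
have : 0 <= e * k * k by rewrite !mulr_ge0.
have : 0 <= k * k * k by rewrite !mulr_ge0.
have : 0 <= e * e by rewrite !mulr_ge0.
have : 0 <= e * k by rewrite !mulr_ge0.
have : 0 <= k * k by rewrite !mulr_ge0.
nra.
Qed.

Lemma P3n_pos (R : realType) (S N : R) : 1 <= S -> 2 * S + 1 <= N -> 0 < Pf S (N - 2 * S) (3 * N).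
Proof.
move=> hS hN; set e := S - 1; set g := N - 2 * S - 1.
have e0 : 0 <= e by rewrite /e; lra.
have g0 : 0 <= g by rewrite /g; lra.
have -> : S = e + 1 by rewrite /e; ring.
have -> : N = 2 * e + 3 + g by rewrite /e /g; ring.
rewrite /Pf /Cf.
have : 0 <= e * e * e by rewrite !mulr_ge0.
have : 0 <= e * e * g by rewrite !mulr_ge0.
have : 0 <= e * g * g by rewrite !mulr_ge0.
have : 0 <= g * g * g by rewrite !mulr_ge0.
have : 0 <= e * e by rewrite !mulr_ge0.
have : 0 <= e * g by rewrite !mulr_ge0.
have : 0 <= g * g by rewrite !mulr_ge0.
nra.
Qed.

Lemma Pf_ivt (R : realType) (S B a b : R) : a <= b -> Pf S B a < 0 -> 0 < Pf S B b ->
  exists l, a < l <= b /\ Pf S B l = 0.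
Proof.
move=> ab ha hb.
pose p : {poly R} := ('X - (2 * S - 2)%:P) * (('X - (S - 1)%:P) * ('X + B%:P + 1)
   - B%:P * (2%:P * 'X - (S - 2)%:P)) - (S ^+ 2)%:P * ('X + B%:P + 1)
   - (2 * B * S)%:P * (2%:P * 'X - (S - 2)%:P).
have pE x : p.[x] = Pf S B x.
  by rewrite /p !hornerE /Pf /Cf; ring.
have [|l /andP[al lb] /rootP] := @poly_ivt R p a b ab.
  by rewrite !pE; apply/andP; split; apply: ltW.
rewrite pE => hl; exists l; split => //.
rewrite lb andbT lt_neqAle al andbT; apply/eqP => al'.
by move: ha; rewrite al' hl ltxx.
Qed.

Theorem mainTheorem4 (R : realType) (delta n : nat) :
  (2 <= delta)%N -> (8 * delta <= n)%N ->
  exists l1 : R,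
    is_lambda1 (@distmx R _ (@KsG n delta)) l1 /\
    (n + delta)%:R < l1 /\
    (forall s : nat, (delta.+1 <= s)%N -> (2 * s <= n - 1)%N ->
       exists l2 : R, is_lambda1 (@distmx R _ (@KsG n s)) l2 /\ l1 < l2).
Proof.
move=> hd hn.
have h2d : (2 * delta <= n)%N by lia.
have Bd : (n - 2 * delta)%N%:R = n%:R - 2 * delta%:R :> R by rewrite natrB // natrM.
have hD : 2 <= delta%:R :> R by rewrite ler_nat.
have hN : 8 * delta%:R <= n%:R :> R.
  by have := hn; rewrite -(ler_nat R) natrM.
have [l1 [/andP[l1a l1b] hP1]] :=
  @Pf_ivt R delta%:R (n%:R - 2 * delta%:R) (n%:R + delta%:R) (3 * n%:R)
    ltac:(lra) (Pd_neg hD hN) (@P3n_pos R delta%:R n%:R ltac:(lra) ltac:(lra)).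
exists l1; split.
  apply: KsG_spec; first by lia.
    by rewrite Bd; lra.
  by rewrite Bd.
split; first by rewrite natrD.
move=> s hs h2s.
have h2s' : (2 * s <= n)%N by lia.
have Bs : (n - 2 * s)%N%:R = n%:R - 2 * s%:R :> R by rewrite natrB // natrM.
have hS : delta%:R + 1 <= s%:R :> R by rewrite natr1 ler_nat.
have hS2 : 2 * s%:R + 1 <= n%:R :> R.
  have : (2 * s + 1 <= n)%N by lia.
  by rewrite -(ler_nat R) natrD natrM.
have hneg : Pf s%:R (n%:R - 2 * s%:R) l1 < 0.
  have E := Pf_diff s%:R delta%:R n%:R l1.
  rewrite hP1 subr0 in E; rewrite E.
  rewrite pmulr_rlt0; last by lra.
  apply: h_neg => //; lra.
have [l2 [/andP[l2a l2b] hP2]] :=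
  @Pf_ivt R s%:R (n%:R - 2 * s%:R) l1 (3 * n%:R) l1b hneg
    (@P3n_pos R s%:R n%:R ltac:(lra) hS2).
exists l2; split => //.
apply: KsG_spec; first by lia.
  by rewrite Bs; lra.
by rewrite Bs.
Qed.
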